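(* Let $(p_{ij})_{i,j\in\{0,1\}}$ be a transition matrix with all $p_{ij}\in(0,1)$ and $p_{ij}\ne\tfrac12$ for some $(i,j)$; for $i\in\{0,1\}$ let $I_n^i\sim B(n,p_{i0})$. Let $(X_n^i,Z_n^i)_{n\in\mathbb N_0}$, $i\in\{0,1\}$, be random variables with finite second moments such that $X_n^i=Z_n^i=0$ for $n\le1$ and, for all $n\ge2$ and $i\in\{0,1\}$, $$\begin{pmatrix}X_n^i\\ Z_n^i\end{pmatrix}\stackrel{d}{=}\begin{pmatrix}X^0_{I_n^i}\\ Z^0_{I_n^i}\end{pmatrix}+\begin{pmatrix}X^1_{n-I_n^i}\\ Z^1_{n-I_n^i}\end{pmatrix}+\begin{pmatrix}\eta_n^{i,1}\\ \eta_n^{i,2}\end{pmatrix},$$ where on the right the families $(X^0_k,Z^0_k)_{k\le n}$, $(X^1_k,Z^1_k)_{k\le n}$ and $I_n^i$ are independent, and $$\eta_n^{i,1}=\frac1H\Big(n\log n-\mathbb E\big[I_n^i\log I_n^i+(n-I_n^i)\log(n-I_n^i)\big]\Big)+\pi_{1-i}\frac{H_{1-i}-H_i}{H}n+\frac{H_1-H_0}{(p_{01}+p_{10})H}p_{i0}p_{i1}^{n-1}n,\quad \eta_n^{i,2}=n-\eta_n^{i,1}$$ (for $n\ge2$; $\eta_n^{i,1}=\eta_n^{i,2}=0$ for $n\le1$). Then for all $n\in\mathbb N_0$, $$\mathbb E[X_n^0]=\frac1H n\log n+\frac{H_1-H_0}{(p_{01}+p_{10})H}n\mathbf 1_{\{n\ge2\}},\qquad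 \mathbb E[X_n^1]=\frac1H n\log n.$$
   Context: $0\log0:=0$. $\pi_0=p_{10}/(p_{01}+p_{10})$, $\pi_1=p_{01}/(p_{01}+p_{10})$, $H_i=-\sum_jp_{ij}\log p_{ij}$, $H=\pi_0H_0+\pi_1H_1$. *)

(* Defs.v *)
From HB Require Import structures.
From mathcomp Require Import all_boot all_order all_algebra.
From mathcomp Require Import all_classical all_reals all_analysis.
Set Implicit Arguments. Unset Strict Implicit. Unset Printing Implicit Defensive.
Import Order.TTheory GRing.Theory Num.Theory.
Local Open Scope classical_set_scope.
Local Open Scope ring_scope.

(* States {0,1} are encoded by bool: false = state 0, true = state 1.
   A transition matrix is p : bool -> bool -> R, p i j = p_{ij}. *)

Section Defs.
Variable R : realType.

Definition xlogx (x : R) : R := if x == 0 then 0 else x * ln x.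

Variable p : bool -> bool -> R.

Definition Hrow (i : bool) : R := - \sum_(j : bool) xlogx (p i j).

(* stationary distribution: pi_0 = p10/(p01+p10), pi_1 = p01/(p01+p10) *)
Definition pist (i : bool) : R :=
  (if i then p false true else p true false) / (p false true + p true false).

Definition Hent : R := pist false * Hrow false + pist true * Hrow true.

Definition binom_pmf (n : nat) (q : R) (k : nat) : R :=
  ('C(n, k))%:R * q ^+ k * (1 - q) ^+ (n - k).

Definition binom_expect (n : nat) (q : R) (f : nat -> R) : R :=
  \sum_(k < n.+1) binom_pmf n q k * f k.

Definition eta1 (i : bool) (n : nat) : R :=
  if (n <= 1)%N then 0 else
    Hent^-1 * (xlogx n%:R
       - binom_expect n (p i false)
           (fun k => xlogx k%:R + xlogx (n - k)%:R))
    + pist (~~ i) * (Hrow (~~ i) - Hrow i) / Hent * n%:R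
    + (Hrow true - Hrow false) / ((p false true + p true false) * Hent)
        * p i false * p i true ^+ n.-1 * n%:R.

Definition eta2 (i : bool) (n : nat) : R :=
  if (n <= 1)%N then 0 else n%:R - eta1 i n.

End Defs.

Definition same_law2 (R : realType) d (T : measurableType d) d' (T' : measurableType d')
  (P : probability T R) (X Z : T -> R) (Q : probability T' R) (X' Z' : T' -> R) :=
  forall A : set (R * R), measurable A ->
    P ((fun t => (X t, Z t)) @^-1` A) = Q ((fun w => (X' w, Z' w)) @^-1` A).

Definition is_binomial (R : realType) d (T : measurableType d) (Q : probability T R)
  (I : T -> nat) (n : nat) (q : R) :=
  forall k : nat, Q (I @^-1` [set k]) = (binom_pmf n q k)%:E.

Definition sigma_pairs (R : realType) (T : Type) (n : nat) (A B : nat -> T -> R) :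
  set (set T) :=
  g_sigma_preimage (fun (k : 'I_n.+1) (w : T) => (A k w, B k w) : R * R).

Definition sigma_nat (T : Type) (I : T -> nat) : set (set T) :=
  g_sigma_preimage (fun (_ : 'I_1) => I).

Definition indep3 (R : realType) d (T : measurableType d) (Q : probability T R)
  (F1 F2 F3 : set (set T)) :=
  forall E1 E2 E3, F1 E1 -> F2 E2 -> F3 E3 ->
    Q (E1 `&` E2 `&` E3) = (Q E1 * Q E2 * Q E3)%E.

(* Main.v *)
Require Import Defs.
From HB Require Import structures.
From mathcomp Require Import all_boot all_order all_algebra.
From mathcomp Require Import all_classical all_reals all_analysis.
From mathcomp Require Import measurable_realfun.
From mathcomp Require Import ring lra.
Import Order.TTheory GRing.Theory Num.Theory.
Local Open Scope classical_set_scope.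
Local Open Scope ring_scope.
Section transfer.
Local Open Scope ereal_scope.
Context d1 d2 (W1 : measurableType d1) (W2 : measurableType d2) (R : realType).
Variables (mu1 : {measure set W1 -> \bar R}) (mu2 : {measure set W2 -> \bar R}).
Variables (f1 : W1 -> R) (f2 : W2 -> R).
Hypotheses (mf1 : measurable_fun setT f1) (mf2 : measurable_fun setT f2).
Hypothesis law : forall B, measurable B -> mu1 (f1 @^-1` B) = mu2 (f2 @^-1` B).

Lemma transfer_ge0 (h : R -> \bar R) : measurable_fun setT h ->
  (forall y, 0 <= h y) -> \int[mu1]_x h (f1 x) = \int[mu2]_x h (f2 x).
Proof.
move=> mh h0.
have E1 := ge0_integral_pushforward mf1 mu1 measurableT mh (fun y _ => h0 y).
have E2 := ge0_integral_pushforward mf2 mu2 measurableT mh (fun y _ => h0 y).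
rewrite preimage_setT in E1; rewrite preimage_setT in E2.
rewrite -E1 -E2; apply: eq_measure_integral => A mA _.
exact: law.
Qed.

Lemma transfer_int : \int[mu1]_x (f1 x)%:E = \int[mu2]_x (f2 x)%:E.
Proof.
rewrite integralE [RHS]integralE.
have mE : measurable_fun [set: R] (fun y : R => y%:E) by exact: EFin_measurable.
congr (_ - _).
  under eq_integral do rewrite funeposE.
  under [RHS]eq_integral do rewrite funeposE.
  apply: (transfer_ge0 (fun y => maxe y%:E 0)).
  by apply: measurable_maxe.
  by move=> y; rewrite le_max lexx orbT.
under eq_integral do rewrite funenegE.
under [RHS]eq_integral do rewrite funenegE.
apply: (transfer_ge0 (fun y => maxe (- y%:E) 0)).
  by apply: measurable_maxe => //; apply: measurableT_comp.
  by move=> y; rewrite le_max lexx orbT.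
Qed.

Lemma transfer_integrable : mu1.-integrable setT (EFin \o f1) ->
  mu2.-integrable setT (EFin \o f2).
Proof.
move=> /integrableP[_ fi]; apply/integrableP; split.
  exact/measurable_EFinP.
rewrite -(transfer_ge0 (fun y => `|y%:E|)) //.
apply: measurableT_comp => //; exact: measurable_EFinP.
Qed.
End transfer.

Section restr.
Local Open Scope ereal_scope.
Context d (W : measurableType d) (R : realType).
Variables (Q : {measure set W -> \bar R}) (E : set W) (mE : measurable E).

Lemma ge0_integral_mrestr (h : W -> \bar R) : measurable_fun setT h ->
  (forall x, 0 <= h x) ->
  \int[mrestr Q mE]_x h x = \int[Q]_(x in E) h x.
Proof.
move=> mh h0.
rewrite -(setUv E) (ge0_integral_setU _ mE (measurableC mE)); first last.
- by rewrite disj_set2E setICr.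
- by move=> x _; exact: h0.
- by rewrite setUv.
rewrite [X in _ + X]null_set_integral ?adde0 //; first last.
- rewrite /= /mrestr setICl; exact: measure0.
- exact: measurable_funS mh.
- exact: measurableC.
apply: eq_measure_integral => A mA AE.
by rewrite /= /mrestr setIidl.
Qed.

Lemma integral_mrestr (f : W -> R) : measurable_fun setT f ->
  \int[mrestr Q mE]_x (f x)%:E = \int[Q]_(x in E) (f x)%:E.
Proof.
move=> mf.
have mfE : measurable_fun [set: W] (EFin \o f) by exact/measurable_EFinP.
rewrite [LHS]integralE [RHS]integralE; congr (_ - _).
  by rewrite ge0_integral_mrestr //; exact: measurable_funepos.
by rewrite ge0_integral_mrestr //; exact: measurable_funeneg.
Qed.
End restr.

Section indep.
Local Open Scope ereal_scope.
Context d (W : measurableType d) (R : realType).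

Lemma integral_mscale_int (Q : {measure set W -> \bar R}) (k : {nonneg R}) (f : W -> R) :
  Q.-integrable setT (EFin \o f) ->
  \int[mscale k Q]_x (f x)%:E = k%:num%:E * \int[Q]_x (f x)%:E.
Proof.
move=> fi.
have mfE : measurable_fun [set: W] (EFin \o f) by exact: measurable_int fi.
rewrite [LHS]integralE [X in _ = _ * X]integralE.
have Hp := ge0_integral_mscale Q measurableT k (measurable_funepos mfE)
  (fun x _ => funepos_ge0 _ x).
have Hn := ge0_integral_mscale Q measurableT k (measurable_funeneg mfE)
  (fun x _ => funeneg_ge0 _ x).
rewrite Hp Hn [RHS]muleBr //.
apply: fin_num_adde_defl; rewrite fin_numN.
exact: (integrable_fin_num measurableT (integrable_funeneg measurableT fi)).
Qed.

Lemma indep_integral (Q : probability W R) (f : W -> R) (E : set W) :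
  measurable_fun setT f -> measurable E ->
  Q.-integrable setT (EFin \o f) ->
  (forall B, measurable B -> Q (f @^-1` B `&` E) = Q (f @^-1` B) * Q E) ->
  \int[Q]_(x in E) (f x)%:E = Q E * \int[Q]_x (f x)%:E.
Proof.
move=> mf mE fi ind.
have c0 : (0 <= fine (Q E))%R by apply: fine_ge0; exact: measure_ge0.
have QE : Q E = (fine (Q E))%:E by rewrite fineK // fin_num_measure.
rewrite -(@integral_mrestr _ _ _ Q E mE f mf) QE.
rewrite -(integral_mscale_int Q (NngNum c0) f fi).
apply: (@transfer_int _ _ _ _ _ (mrestr Q mE) (mscale (NngNum c0) Q) f f mf mf).
move=> B mB; rewrite /= /mrestr /mscale /= ind // QE muleC.
by [].
Qed.
End indep.

Lemma law_fst (R : realType) d (T : measurableType d) d' (T' : measurableType d')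
  (P : probability T R) (X Z : T -> R) (Q : probability T' R) (X' Z' : T' -> R) :
  same_law2 P X Z Q X' Z' ->
  forall B, measurable B -> P (X @^-1` B) = Q (X' @^-1` B).
Proof.
move=> h B mB.
have := h (B `*` setT) (measurableX mB measurableT).
have -> : (fun t => (X t, Z t)) @^-1` (B `*` setT) = X @^-1` B.
  by apply/seteqP; split => t /=; [case|].
have -> // : (fun t => (X' t, Z' t)) @^-1` (B `*` setT) = X' @^-1` B.
  by apply/seteqP; split => t /=; [case|].
Qed.

Lemma measurable_comp_nat (R : realType) d (W : measurableType d) (I : W -> nat)
  (F : nat -> W -> R) : measurable_fun setT I ->
  (forall k, measurable_fun setT (F k)) ->
  measurable_fun setT (fun w => F (I w) w).
Proof.
move=> mI mF _ B mB; rewrite setTI.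
have -> : (fun w => F (I w) w) @^-1` B =
    \bigcup_k (I @^-1` [set k] `&` F k @^-1` B).
  apply/seteqP; split => w /=.
    by move=> Bw; exists (I w) => //.
  by move=> [k _ [/= -> ]].
apply: bigcupT_measurable => k; apply: measurableI.
  by rewrite -(setTI (I @^-1` _)); apply: mI.
by rewrite -(setTI (F k @^-1` _)); apply: mF.
Qed.

Lemma sq_integrable (R : realType) d (T : measurableType d) (P : probability T R)
  (f : T -> R) : measurable_fun setT f ->
  P.-integrable setT (EFin \o (fun t => f t ^+ 2)) ->
  P.-integrable setT (EFin \o f).
Proof.
move=> mf fi.
have i1 : P.-integrable setT (fun t => (1 + f t ^+ 2)%:E).
  apply: (eq_integrable _ ((EFin \o cst 1) \+ (EFin \o (fun t => f t ^+ 2)))) => //.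
  apply: integrableD => //.
  exact: finite_measure_integrable_cst.
apply: le_integrable i1 => //.
  exact/measurable_EFinP.
move=> t _ /=; rewrite lee_fin.
have h2 : 0 <= 1 + f t ^+ 2 by rewrite addr_ge0 // sqr_ge0.
rewrite (ger0_norm h2).
have [h|h] := lerP 0 (f t); [rewrite ger0_norm // | rewrite ltr0_norm //]; nra.
Qed.

Section binom.
Context (R : realType).

Lemma binom_sum1 (n : nat) (q : R) : \sum_(k < n.+1) binom_pmf n q k = 1.
Proof.
have := exprDn (1 - q) q n; rewrite subrK expr1n => ->.
apply: eq_bigr => k _; rewrite /binom_pmf -mulr_natl; ring.
Qed.

Lemma binom_mean (n : nat) (q : R) :
  \sum_(k < n.+1) binom_pmf n q k * k%:R = n%:R * q.
Proof.
case: n => [|m]; first by rewrite big_ord1 mulr0 mul0r.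
rewrite big_ord_recl /= mulr0 add0r.
have -> : \sum_(i < m.+1) binom_pmf m.+1 q (bump 0 i) * (bump 0 i)%:R =
          \sum_(i < m.+1) (m.+1)%:R * q * binom_pmf m q i.
  apply: eq_bigr => i _; rewrite /binom_pmf /bump /= add1n subSS.
  have := mul_bin_diag m.+1 i => /(congr1 (fun x => x%:R : R)).
  rewrite !natrM /= => h.
  rewrite exprS.
  have -> : ('C(m.+1, i.+1))%:R * (q * q ^+ i) * (1 - q) ^+ (m - i) * (i.+1)%:R
          = ((i.+1)%:R * ('C(m.+1, i.+1))%:R) * q * q ^+ i * (1 - q) ^+ (m - i) by ring.
  rewrite -h; ring.
by rewrite -big_distrr /= binom_sum1 mulr1.
Qed.

Lemma binom_pmf1 (n : nat) (q : R) : binom_pmf n q 1 = n%:R * q * (1 - q) ^+ n.-1.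
Proof. by rewrite /binom_pmf bin1 expr1 subn1. Qed.

Lemma binom_pmfn (n : nat) (q : R) : binom_pmf n q n = q ^+ n.
Proof. by rewrite /binom_pmf binn subnn expr0 mulr1 mul1r. Qed.

Lemma binom_pmf0 (n : nat) (q : R) : binom_pmf n q 0 = (1 - q) ^+ n.
Proof. by rewrite /binom_pmf bin0 subn0 expr0 mulr1 mul1r. Qed.
End binom.

Lemma sigma_pairs_mem (R : realType) (T : Type) (n : nat) (A B : nat -> T -> R)
  (k : nat) (C : set R) : (k <= n)%N -> measurable C ->
  sigma_pairs n A B (A k @^-1` C).
Proof.
move=> kn mC; apply: sub_sigma_algebra; rewrite -bigcup_mkord_ord.
exists k; first by rewrite /= ltnS.
exists (C `*` setT); first exact: measurableX.
rewrite setTI /= inordK ?ltnS //.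
by apply/seteqP; split => t /=; [case|].
Qed.

Lemma sigma_pairs_mem2 (R : realType) (T : Type) (n : nat) (A B : nat -> T -> R)
  (k : nat) (C : set R) : (k <= n)%N -> measurable C ->
  sigma_pairs n B A (A k @^-1` C).
Proof.
move=> kn mC; apply: sub_sigma_algebra; rewrite -bigcup_mkord_ord.
exists k; first by rewrite /= ltnS.
exists (setT `*` C); first exact: measurableX.
rewrite setTI /= inordK ?ltnS //.
by apply/seteqP; split => t /=; [case|].
Qed.

Lemma sigma_pairsT (R : realType) (T : Type) (n : nat) (A B : nat -> T -> R) :
  sigma_pairs n A B setT.
Proof.
have [h0 hC _] := smallest_sigma_algebra setT
  (\big[setU/set0]_(i < n.+1)
     preimage_set_system setT (fun w : T => (A i w, B i w) : R * R) measurable).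
by have := hC _ h0; rewrite setD0.
Qed.

Lemma sigma_nat_mem (T : Type) (I : T -> nat) (k : nat) :
  sigma_nat I (I @^-1` [set k]).
Proof.
apply: sub_sigma_algebra; rewrite big_ord_recl big_ord0 setU0.
by exists [set k] => //; rewrite setTI.
Qed.

Section intindic.
Local Open Scope ereal_scope.
Lemma int_indic (R : realType) d (W : measurableType d) (Q : probability W R)
  (E : set W) (f1 f2 : W -> R) (c : R) : measurable E ->
  Q.-integrable setT (EFin \o f1) -> Q.-integrable setT (EFin \o f2) ->
  \int[Q]_x ((\1_E x * (f1 x + f2 x + c))%R)%:E =
  \int[Q]_(x in E) (f1 x)%:E + \int[Q]_(x in E) (f2 x)%:E + c%:E * Q E.
Proof.
move=> mE i1 i2.
have i1E := integrableS measurableT mE (@subsetT _ E) i1.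
have i2E := integrableS measurableT mE (@subsetT _ E) i2.
have i12E : Q.-integrable E (EFin \o (fun x => f1 x + f2 x)%R).
  apply: (eq_integrable _ ((EFin \o f1) \+ (EFin \o f2))) => //.
  exact: integrableD.
have icE : Q.-integrable E (EFin \o cst c) by exact: finite_measure_integrable_cst.
transitivity (\int[Q]_(x in E) ((EFin \o (fun x => f1 x + f2 x)%R) x + (EFin \o cst c) x)).
  rewrite [RHS]integral_mkcond; apply: eq_integral => x _; rewrite patchE indicE.
  by case: (x \in E) => /=; rewrite ?mul1r ?mul0r ?EFinD.
rewrite integralD_EFin //.
have -> : \int[Q]_(x in E) (EFin \o cst c) x = c%:E * Q E.
  exact: (integral_cst Q mE c%:E).
congr (_ + _).
transitivity (\int[Q]_(x in E) ((EFin \o f1) x + (EFin \o f2) x)).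
  by apply: eq_integral => x _; rewrite /= EFinD.
by rewrite integralD_EFin.
Qed.

Lemma int_indic_integrable (R : realType) d (W : measurableType d) (Q : probability W R)
  (E : set W) (f1 f2 : W -> R) (c : R) : measurable E ->
  Q.-integrable setT (EFin \o f1) -> Q.-integrable setT (EFin \o f2) ->
  Q.-integrable setT (fun x => ((\1_E x * (f1 x + f2 x + c))%R)%:E).
Proof.
move=> mE i1 i2.
have i3 : Q.-integrable setT ((EFin \o f1) \+ (EFin \o f2) \+ (EFin \o cst c)).
  apply: integrableD => //; first exact: integrableD.
  exact: finite_measure_integrable_cst.
apply: le_integrable i3 => //.
  apply/measurable_EFinP; apply: measurable_funM.
    exact: measurable_indic.
  apply: measurable_funD; last exact: measurable_cst.
  by apply: measurable_funD; apply/measurable_EFinP; [exact: measurable_int i1|exact: measurable_int i2].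
move=> x _ /=; rewrite lee_fin indicE; case: (x \in E) => /=.
  by rewrite mul1r.
by rewrite mul0r normr0.
Qed.
End intindic.

Lemma sum_indic_nat (R : realType) (T : Type) (I : T -> nat) (n : nat) (h : nat -> R) (w : T) :
  (I w <= n)%N ->
  \sum_(k < n.+1) \1_(I @^-1` [set (k : nat)]) w * h k = h (I w).
Proof.
move=> hw.
have hw' : (I w < n.+1)%N by rewrite ltnS.
rewrite (bigD1 (Ordinal hw')) //= big1 ?addr0.
  by rewrite indicE mem_set // mul1r.
move=> j hj; rewrite indicE memNset ?mul0r //= => hjw.
by move: hj; apply/negP/negPn/eqP; apply: val_inj => /=.
Qed.

Section rec.
Local Open Scope ereal_scope.

Lemma rec_mean (R : realType) d (T : measurableType d) (P : probability T R)
  (X Z : nat -> bool -> T -> R) (n : nat) (i : bool) (q eta eta' : R) :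
  (forall k j, measurable_fun setT (X k j)) ->
  (forall k j, P.-integrable setT (EFin \o X k j)) ->
  (exists (d' : measure_display) (W : measurableType d') (Q : probability W R)
            (X0 Z0 X1 Z1 : nat -> W -> R) (I : W -> nat),
       measurable_fun setT I /\
       (forall k, measurable_fun setT (X0 k) /\ measurable_fun setT (Z0 k) /\
                  measurable_fun setT (X1 k) /\ measurable_fun setT (Z1 k)) /\
       (forall k, (k <= n)%N ->
          same_law2 P (X k false) (Z k false) Q (X0 k) (Z0 k) /\
          same_law2 P (X k true) (Z k true) Q (X1 k) (Z1 k)) /\
       is_binomial Q I n q /\
       indep3 Q (sigma_pairs n X0 Z0) (sigma_pairs n X1 Z1) (sigma_nat I) /\
       same_law2 P (X n i) (Z n i) Q
         (fun w => X0 (I w) w + X1 (n - I w)%N w + eta)%R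
         (fun w => Z0 (I w) w + Z1 (n - I w)%N w + eta')%R) ->
  'E_P[X n i] = (\sum_(k < n.+1) binom_pmf n q k *
      (fine 'E_P[X k false] + fine 'E_P[X (n - k)%N true] + eta))%:E.
Proof.
move=> mX iX [d' [W [Q [X0 [Z0 [X1 [Z1 [I [mI [mXs [laws [bin [ind lawn]]]]]]]]]]]]].
have mX0 k : measurable_fun setT (X0 k) by case: (mXs k).
have mX1 k : measurable_fun setT (X1 k) by case: (mXs k) => _ [_ []].
have law0 k : (k <= n)%N -> forall B, measurable B ->
    P (X k false @^-1` B) = Q (X0 k @^-1` B).
  by move=> hk; apply: law_fst (laws k hk).1.
have law1 k : (k <= n)%N -> forall B, measurable B ->
    P (X k true @^-1` B) = Q (X1 k @^-1` B).
  by move=> hk; apply: law_fst (laws k hk).2.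
have iX0 k : (k <= n)%N -> Q.-integrable setT (EFin \o X0 k).
  by move=> hk; exact: (@transfer_integrable _ _ _ _ _ P Q _ _ (mX k false) (mX0 k) (law0 k hk) (iX k false)).
have iX1 k : (k <= n)%N -> Q.-integrable setT (EFin \o X1 k).
  by move=> hk; exact: (@transfer_integrable _ _ _ _ _ P Q _ _ (mX k true) (mX1 k) (law1 k hk) (iX k true)).
have eX0 k : (k <= n)%N -> \int[Q]_x (X0 k x)%:E = 'E_P[X k false].
  by move=> hk; rewrite unlock; exact/esym/(@transfer_int _ _ _ _ _ P Q _ _ (mX k false) (mX0 k) (law0 k hk)).
have eX1 k : (k <= n)%N -> \int[Q]_x (X1 k x)%:E = 'E_P[X k true].
  by move=> hk; rewrite unlock; exact/esym/(@transfer_int _ _ _ _ _ P Q _ _ (mX k true) (mX1 k) (law1 k hk)).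
pose Ek k := I @^-1` [set k].
have mEk k : measurable (Ek k) by rewrite -(setTI (Ek k)); exact: mI.
pose g w := (X0 (I w) w + X1 (n - I w)%N w + eta)%R.
have mg : measurable_fun setT g.
  apply: measurable_funD; last exact: measurable_cst.
  apply: measurable_funD; first exact: measurable_comp_nat.
  exact: (@measurable_comp_nat _ _ _ I (fun k => X1 (n - k)%N) mI (fun k => mX1 _)).
pose h k w := (X0 k w + X1 (n - k)%N w + eta)%R.
pose g2 w := (\sum_(k < n.+1) \1_(Ek k) w * h k w)%R.
have mg2 : measurable_fun setT g2.
  apply: measurable_sum => k; apply: measurable_funM; first exact: measurable_indic.
  apply: measurable_funD; last exact: measurable_cst.
  by apply: measurable_funD.
have step1 : 'E_P[X n i] = \int[Q]_x (g x)%:E.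
  by rewrite unlock; exact: (@transfer_int _ _ _ _ _ P Q _ _ (mX n i) mg (@law_fst _ _ _ _ _ _ _ _ _ _ _ lawn)).
pose S := \bigcup_(k < n.+1) Ek k.
have mS : measurable S by apply: bigcup_measurable => k _; exact: mEk.
have QS : Q S = 1.
  rewrite /S bigcup_mkord measure_bigsetU //; last exact: trivIset_preimage1.
  rewrite (eq_bigr (fun k : 'I_n.+1 => (binom_pmf n q k)%:E)); last first.
    by move=> k _; exact: bin.
  by rewrite sumEFin binom_sum1.
have QN : Q (~` S) = 0 by rewrite probability_setC // QS subee.
have step2 : \int[Q]_x (g x)%:E = \int[Q]_x (g2 x)%:E.
  apply: ae_eq_integral => //.
  - exact/measurable_EFinP.
  - exact/measurable_EFinP.
  exists (~` S); split => //; first exact: measurableC.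
  move=> w /= hw [k /= kn Ekw]; apply: hw => _.
  have Iw : I w = k := Ekw.
  rewrite /g2 /Ek (@sum_indic_nat _ _ I n (fun k => h k w) w); last by rewrite Iw -ltnS.
  by rewrite /h /g.
have hk (k : 'I_n.+1) : (k <= n)%N by rewrite -ltnS.
have hnk (k : nat) : (n - k <= n)%N by exact: leq_subr.
have fin0 k j : 'E_P[X k j] = (fine 'E_P[X k j])%:E.
  rewrite fineK // unlock; exact: (integrable_fin_num measurableT (iX k j)).
rewrite step1 step2.
have -> : \int[Q]_x (g2 x)%:E =
    \int[Q]_x (\sum_(k < n.+1) ((\1_(Ek k) x * h k x)%R)%:E).
  by apply: eq_integral => x _; rewrite sumEFin.
rewrite integral_sum //; last first.
  move=> k; apply: int_indic_integrable => //; [exact: iX0|exact: iX1].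
rewrite -sumEFin; apply: eq_bigr => k _.
rewrite (@int_indic _ _ _ Q (Ek k) (X0 k) (X1 (n - k)%N) eta (mEk k) (iX0 _ (hk k)) (iX1 _ (hnk k))).
rewrite (@indep_integral _ _ _ Q (X0 k) (Ek k) (mX0 k) (mEk k) (iX0 _ (hk k))); last first.
  move=> B mB; have := ind (X0 k @^-1` B) setT (Ek k).
  rewrite setIT probability_setT mule1; apply.
  - exact: sigma_pairs_mem.
  - exact: sigma_pairsT.
  - exact: sigma_nat_mem.
rewrite (@indep_integral _ _ _ Q (X1 (n - k)%N) (Ek k) (mX1 _) (mEk k) (iX1 _ (hnk k))); last first.
  move=> B mB; have := ind setT (X1 (n - k)%N @^-1` B) (Ek k).
  rewrite setTI probability_setT mul1e; apply.
  - exact: sigma_pairsT.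
  - exact: sigma_pairs_mem.
  - exact: sigma_nat_mem.
rewrite eX0 // eX1 // [Q (Ek k)]bin fin0 [in X in _ = X]fin0 (fin0 (n - k)%N true).
rewrite -!EFinM -!EFinD; congr EFin; ring.
Qed.
End rec.

Section closed.
Context (R : realType) (p : bool -> bool -> R).
Hypothesis hrow : forall i, p i false + p i true = 1.

Definition Cc := (Hrow p true - Hrow p false) / ((p false true + p true false) * Hent p).
Definition Fcl (i : bool) (n : nat) : R :=
  if i then (Hent p)^-1 * xlogx n%:R
  else (Hent p)^-1 * xlogx n%:R + Cc * n%:R * (if (2 <= n)%N then 1 else 0).

Lemma nat_ge2 (k : nat) :
  k%:R * (if (2 <= k)%N then 1 else 0) = k%:R - (k == 1)%:R :> R.
Proof. by case: k => [|[|k]] /=; rewrite ?mulr0 ?subr0 ?mulr1 ?subrr. Qed.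

Lemma sum_eq1 (n : nat) (b : nat -> R) : (1 <= n)%N ->
  \sum_(k < n.+1) b k * ((k : nat) == 1%N)%:R = b 1.
Proof.
move=> hn.
have h1 : (1 < n.+1)%N by rewrite ltnS.
rewrite (bigD1 (Ordinal h1)) //= big1 ?addr0 ?mulr1 //.
move=> j hj; case: eqP => [hj1|]; last by rewrite mulr0.
by move: hj; rewrite (_ : j = Ordinal h1) ?eqxx //; apply: val_inj.
Qed.

Lemma closed_rec (i : bool) (n : nat) : (2 <= n)%N ->
  Fcl i n = \sum_(k < n.+1) binom_pmf n (p i false) k *
     (Fcl false k + Fcl true (n - k)%N + eta1 p i n).
Proof.
move=> hn.
set BE := binom_expect n (p i false) (fun k => xlogx k%:R + xlogx (n - k)%:R).
have e1 : eta1 p i n = (Hent p)^-1 * (xlogx n%:R - BE)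
    + pist p (~~ i) * (Hrow p (~~ i) - Hrow p i) / Hent p * n%:R
    + Cc * p i false * p i true ^+ n.-1 * n%:R.
  by rewrite /eta1 leqNgt hn.
have -> : \sum_(k < n.+1) binom_pmf n (p i false) k * (Fcl false k + Fcl true (n - k)%N + eta1 p i n)
  = (Hent p)^-1 * BE + Cc * (\sum_(k < n.+1) binom_pmf n (p i false) k * k%:R)
    - Cc * (\sum_(k < n.+1) binom_pmf n (p i false) k * ((k : nat) == 1%N)%:R)
    + eta1 p i n * (\sum_(k < n.+1) binom_pmf n (p i false) k).
  rewrite /BE /binom_expect !big_distrr /= -!big_split /= -sumrB -big_split /=.
  apply: eq_bigr => k _; rewrite /Fcl -mulrA nat_ge2; ring.
rewrite binom_mean sum_eq1 ?(leq_trans _ hn) // binom_sum1 binom_pmf1 mulr1 e1.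
have hq : 1 - p i false = p i true by rewrite -(hrow i) addrC addKr.
rewrite hq /Fcl /Cc /pist invfM.
have -> : (2 <= n)%N = true by [].
clearbody BE; case: i {e1 hq} => /=.
  have hp : p true false = 1 - p true true by rewrite -(hrow true) addrK.
  rewrite hp; ring.
have hp : p false false = 1 - p false true by rewrite -(hrow false) addrK.
rewrite hp; ring.
Qed.
End closed.

Lemma diff_sum1 (R : realType) (n : nat) (b u : nat -> R) :
  (forall k, (k < n)%N -> u k = 0) ->
  \sum_(k < n.+1) b k * u k = b n * u n.
Proof.
move=> hu; rewrite big_ord_recr /= big1 ?add0r // => k _.
by rewrite hu ?mulr0.
Qed.

Lemma diff_sum2 (R : realType) (n : nat) (b v : nat -> R) :
  (forall k, (k < n)%N -> v k = 0) ->
  \sum_(k < n.+1) b k * v (n - k)%N = b 0%N * v n.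
Proof.
move=> hv; rewrite big_ord_recl /= subn0 big1 ?addr0 // => k _.
rewrite hv ?mulr0 //= /bump /=.
by rewrite ltn_subrL add1n /= (leq_ltn_trans _ (ltn_ord k)).
Qed.

Lemma solve2 (R : realType) (a0 b0 a1 b1 e0 e1 : R) :
  0 <= a0 -> 0 <= b0 -> 0 <= a1 -> 0 <= b1 -> a0 + b0 < 1 -> a1 + b1 < 1 ->
  e0 = a0 * e0 + b0 * e1 -> e1 = a1 * e0 + b1 * e1 -> e0 = 0 /\ e1 = 0.
Proof.
move=> ha0 hb0 ha1 hb1 h0 h1 E0 E1.
have hD : 0 < (1 - a0) * (1 - b1) - a1 * b0 by nra.
have he0 : e0 * ((1 - a0) * (1 - b1) - a1 * b0) =
    (1 - b1) * (e0 - (a0 * e0 + b0 * e1)) + b0 * (e1 - (a1 * e0 + b1 * e1)) by ring.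
rewrite -E0 -E1 !subrr !mulr0 addr0 in he0.
have e00 : e0 = 0.
  by move/eqP: he0; rewrite mulf_eq0 => /orP[/eqP //|/eqP h]; move: hD; rewrite h ltxx.
split => //.
move: E1; rewrite e00 mulr0 add0r => E1.
have : (1 - b1) * e1 = 0 by rewrite mulrBl mul1r -E1 subrr.
move/eqP; rewrite mulf_eq0 => /orP[/eqP h|/eqP //].
by move: h1; rewrite -(subr0 1) -h; lra.
Qed.

Lemma pow_lt2 (R : realType) (x : R) (n : nat) : 0 < x < 1 -> (2 <= n)%N -> x ^+ n < x.
Proof.
move=> /andP[h0 h1] hn; case: n hn => [|[|n]] // _.
rewrite exprS -[ltRHS]mulr1 ltr_pM2l //.
by rewrite exprn_ilt1 ?(ltW h0).
Qed.
Theorem lemma6p3 (R : realType) (p : bool -> bool -> R)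
  (d : measure_display) (T : measurableType d) (P : probability T R)
  (X Z : nat -> bool -> T -> R) :
  (* transition matrix with all entries in (0,1), some entry <> 1/2 *)
  (forall i j, 0 < p i j < 1) ->
  (forall i, p i false + p i true = 1) ->
  (exists i j, p i j != 2^-1) ->
  (* measurable, with finite second moments *)
  (forall n i, measurable_fun setT (X n i) /\ measurable_fun setT (Z n i)) ->
  (forall n i, P.-integrable setT (EFin \o (fun t => X n i t ^+ 2)) /\
               P.-integrable setT (EFin \o (fun t => Z n i t ^+ 2))) ->
  (* initial values *)
  (forall n i, (n <= 1)%N -> forall t, X n i t = 0 /\ Z n i t = 0) ->
  (* distributional recursion with independent copies *)
  (forall n i, (2 <= n)%N ->
     exists (d' : measure_display) (W : measurableType d') (Q : probability W R)
            (X0 Z0 X1 Z1 : nat -> W -> R) (I : W -> nat),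
       measurable_fun setT I /\
       (forall k, measurable_fun setT (X0 k) /\ measurable_fun setT (Z0 k) /\
                  measurable_fun setT (X1 k) /\ measurable_fun setT (Z1 k)) /\
       (forall k, (k <= n)%N ->
          same_law2 P (X k false) (Z k false) Q (X0 k) (Z0 k) /\
          same_law2 P (X k true) (Z k true) Q (X1 k) (Z1 k)) /\
       is_binomial Q I n (p i false) /\
       indep3 Q (sigma_pairs n X0 Z0) (sigma_pairs n X1 Z1) (sigma_nat I) /\
       same_law2 P (X n i) (Z n i) Q
         (fun w => X0 (I w) w + X1 (n - I w)%N w + eta1 p i n)
         (fun w => Z0 (I w) w + Z1 (n - I w)%N w + eta2 p i n)) ->
  forall n : nat,
    ('E_P[X n false])%E =
      ((Hent p)^-1 * xlogx n%:R
       + (Hrow p true - Hrow p false) / ((p false true + p true false) * Hent p)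
         * n%:R * (if (2 <= n)%N then 1 else 0))%:E /\
    ('E_P[X n true])%E = ((Hent p)^-1 * xlogx n%:R)%:E.
Proof.
move=> hp hrow _ hm hsq h0 hrec.
have mX k j : measurable_fun setT (X k j) := (hm k j).1.
have iX k j : P.-integrable setT (EFin \o X k j) :=
  @sq_integrable _ _ _ P _ (mX k j) (hsq k j).1.
have fin k j : ('E_P[X k j] = (fine 'E_P[X k j])%:E)%E.
  rewrite fineK // unlock; exact: (integrable_fin_num measurableT (iX k j)).
suff key : forall n, fine 'E_P[X n false] = Fcl _ p false n /\
                     fine 'E_P[X n true] = Fcl _ p true n.
  move=> n; have [k0 k1] := key n.
  by rewrite (fin n false) k0 (fin n true) k1 /Fcl /Cc.
elim/ltn_ind => n IH.
case: (leqP n 1) => hn.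
  have E0 j : ('E_P[X n j] = 0)%E.
    rewrite unlock (eq_integral (fun _ => 0%E)); first exact: integral0.
    by move=> t _; rewrite (h0 n j hn t).1.
  rewrite !E0 /=.
  have xl0 : xlogx (0%:R : R) = 0 by rewrite /xlogx eqxx.
  have xl1 : xlogx (1%:R : R) = 0 by rewrite /xlogx oner_eq0 ln1 mulr0.
  by move: hn; case: n {IH E0} => [|[|//]] _; rewrite /Fcl ?xl0 ?xl1 /= !mulr0 ?addr0.
set a := fun k j => fine 'E_P[X k j].
have r j : a n j = \sum_(k < n.+1) binom_pmf n (p j false) k *
    (a k false + a (n - k)%N true + eta1 p j n).
  by rewrite /a (@rec_mean _ _ _ P X Z n j _ _ _ mX iX (hrec n j hn)).
set e0 := a n false - Fcl _ p false n.
set e1 := a n true - Fcl _ p true n.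
have D j : a n j - Fcl _ p j n =
    binom_pmf n (p j false) n * e0 + binom_pmf n (p j false) 0 * e1.
  rewrite [X in X - _]r (@closed_rec R p hrow j n hn) -sumrB.
  have -> : \sum_(k < n.+1) (binom_pmf n (p j false) k *
         (a k false + a (n - k)%N true + eta1 p j n) -
       binom_pmf n (p j false) k *
         (Fcl _ p false k + Fcl _ p true (n - k)%N + eta1 p j n)) =
      \sum_(k < n.+1) binom_pmf n (p j false) k * (a k false - Fcl _ p false k)
    + \sum_(k < n.+1) binom_pmf n (p j false) k * (a (n - k)%N true - Fcl _ p true (n - k)%N).
    by rewrite -big_split; apply: eq_bigr => k _ /=; ring.
  have S1 := @diff_sum1 _ n (binom_pmf n (p j false)) (fun k => a k false - Fcl _ p false k).
  have S2 := @diff_sum2 _ n (binom_pmf n (p j false)) (fun k => a k true - Fcl _ p true k).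
  rewrite /= in S1 S2; rewrite S1 ?S2 //.
    by move=> k hk; rewrite /a (IH k hk).2 subrr.
  by move=> k hk; rewrite /a (IH k hk).1 subrr.
have hq j : 0 < p j false < 1 := hp j false.
have hq' j : 0 < 1 - p j false < 1.
  have -> : 1 - p j false = p j true by rewrite -(hrow j); ring.
  exact: hp.
have nn j : 0 <= binom_pmf n (p j false) n.
  by rewrite binom_pmfn exprn_ge0 // ltW //; case/andP: (hq j).
have nn' j : 0 <= binom_pmf n (p j false) 0.
  by rewrite binom_pmf0 exprn_ge0 // ltW //; case/andP: (hq' j).
have lt1 j : binom_pmf n (p j false) n + binom_pmf n (p j false) 0 < 1.
  rewrite binom_pmfn binom_pmf0.
  have := @pow_lt2 _ _ n (hq j) hn; have := @pow_lt2 _ _ n (hq' j) hn; lra.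
have [z0 z1] := @solve2 R _ _ _ _ _ _ (nn false) (nn' false) (nn true) (nn' true) (lt1 false) (lt1 true)
  (D false) (D true).
by split; apply/eqP; rewrite -subr_eq0; apply/eqP.
Qed.
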